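(* Let $X$ be a locally compact Polish space and $B\subseteq X$ dense. Let $\succeq'$ be a complete binary relation on $X$, and let $\succeq$ and $\succeq^*$ be complete, continuous, locally strict binary relations on $X$. If $\succeq'\cap(B\times B)\subseteq\succeq^*\cap\succeq\cap(B\times B)$, then $\succeq^*=\succeq$.
   Context: A binary relation $R\subseteq X\times X$ is complete if for all $x,y$, $xRy$ or $yRx$; continuous if closed in $X\times X$; locally strict if for all $x R y$ and every neighborhood $V$ of $(x,y)$ there is $(x',y')\in V$ with $x'Ry'$ and not $y'Rx'$. *)

(* Defs.v *)
From HB Require Import structures.
From mathcomp Require Import all_boot all_order all_algebra.
From mathcomp Require Import all_classical all_reals all_analysis.
From mathcomp Require Import Rstruct Rstruct_topology.
From Stdlib Require Import Reals.
Set Implicit Arguments. Unset Strict Implicit. Unset Printing Implicit Defensive.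
Local Open Scope classical_set_scope.

Definition rel_complete (X : Type) (Rel : set (X * X)) : Prop :=
  forall x y : X, Rel (x, y) \/ Rel (y, x).

Definition rel_continuous (X : topologicalType) (Rel : set (X * X)) : Prop :=
  closed Rel.

Definition rel_locally_strict (X : topologicalType) (Rel : set (X * X)) : Prop :=
  forall x y : X, Rel (x, y) ->
  forall V : set (X * X), nbhs (x, y) V ->
  exists x' y', V (x', y') /\ Rel (x', y') /\ ~ Rel (y', x').

Definition separable_space (X : topologicalType) : Prop :=
  exists D : set X, countable D /\ dense D.

Definition completely_metrizable (X : topologicalType) : Prop :=
  exists d : X -> X -> Rdefinitions.R,
    (forall x y, Rle 0 (d x y)) /\
    (forall x y, d x y = 0%R <-> x = y) /\
    (forall x y, d x y = d y x) /\
    (forall x y z, Rle (d x z) (Rplus (d x y) (d y z))) /\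
    (forall (x : X) (A : set X),
        nbhs x A <-> exists e, Rlt 0 e /\ [set y | Rlt (d x y) e] `<=` A) /\
    (forall u : nat -> X,
        (forall e, Rlt 0 e -> exists N : nat, forall m n : nat,
            (N <= m)%N -> (N <= n)%N -> Rlt (d (u m) (u n)) e) ->
        exists l : X, forall e, Rlt 0 e -> exists N : nat, forall n : nat,
            (N <= n)%N -> Rlt (d (u n) l) e).

Definition polish_space (X : topologicalType) : Prop :=
  separable_space X /\ completely_metrizable X.

(* Main.v *)
Require Import Defs.
From HB Require Import structures.
From mathcomp Require Import all_boot all_order all_algebra.
From mathcomp Require Import all_classical all_reals all_analysis.
Local Open Scope classical_set_scope.
Set Implicit Arguments. Unset Strict Implicit.

Lemma dense_nbhs_meet (X : topologicalType) (B : set X) (x : X) (N : set X) :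
  dense B -> nbhs x N -> exists b, B b /\ N b.
Proof.
move=> dB; rewrite nbhsE; case=> O [oO Ox] ON.
have [b [Ob Bb]] := dB O (ex_intro _ x Ox) oO.
by exists b; split => //; apply: ON.
Qed.

Lemma closedC_nbhs (X : topologicalType) (C : set X) (p : X) :
  closed C -> ~ C p -> nbhs p (~` C).
Proof.
move=> cC Cp; apply: open_nbhs_nbhs; split => //; exact: closed_openC.
Qed.

Lemma half_incl (X : topologicalType) (B : set X) (Rp Rs Rst : set (X * X)) :
  dense B -> rel_complete Rp ->
  rel_continuous Rs -> rel_continuous Rst -> rel_locally_strict Rst ->
  (forall a b, B a -> B b -> Rp (a, b) -> Rs (a, b) /\ Rst (a, b)) ->
  Rst `<=` Rs.
Proof.
move=> dB cp cs cst lst H [x y] Rxy.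
apply: contrapT => nRs.
have [x' [y' [V' [Rst' nRst']]]] := lst x y Rxy _ (closedC_nbhs cs nRs).
have [[P Q] [/= Px Qy] PQ] := closedC_nbhs cs V'.
have [[P2 Q2] [/= Py Qx] PQ2] := closedC_nbhs cst nRst'.
have [b1 [Bb1 [Pb1 Qb1]]] := dense_nbhs_meet dB (filterI Px Qx).
have [b2 [Bb2 [Qb2 Pb2]]] := dense_nbhs_meet dB (filterI Qy Py).
case: (cp b1 b2) => h.
- have [hs _] := H _ _ Bb1 Bb2 h.
  by apply: (PQ (b1, b2)).
- have [_ hst] := H _ _ Bb2 Bb1 h.
  by apply: (PQ2 (b2, b1)).
Qed.

Theorem lemma11 (X : topologicalType) (B : set X)
  (Rp Rs Rst : set (X * X)) :
  polish_space X -> locally_compact [set: X] -> dense B ->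
  rel_complete Rp ->
  rel_complete Rs -> rel_continuous Rs -> rel_locally_strict Rs ->
  rel_complete Rst -> rel_continuous Rst -> rel_locally_strict Rst ->
  Rp `&` (B `*` B) `<=` Rst `&` Rs `&` (B `*` B) ->
  Rst = Rs.
Proof.
move=> _ _ dB cp _ cs ls _ cst lst H.
have H' : forall a b, B a -> B b -> Rp (a, b) -> Rs (a, b) /\ Rst (a, b).
  move=> a b Ba Bb h.
  have [[h1 h2] _] := H (a, b) (conj h (conj Ba Bb)).
  by split.
apply/seteqP; split.
- exact: (half_incl dB cp cs cst lst H').
- apply: (half_incl dB cp cst cs ls).
  by move=> a b Ba Bb h; have [] := H' a b Ba Bb h.
Qed.
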